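(* Let $N \ge 1$ and let $(\mathbf{x}_1,y_1),\dots,(\mathbf{x}_N,y_N)$ be labeled data points with labels in $\{1,\dots,C\}$. Let $\hat{P'}(y\mid\mathbf{x})$ and $\hat{P}(y\mid\mathbf{x};\theta_t)$ be conditional probability distributions over the labels, with $\hat{P}(y_i\mid\mathbf{x}_i;\theta_t) > 0$ for every $i$. Define the Dynamic Importance Loss $$\mathcal{L}_{\text{DIMP}}(\theta_t, D_Q) = -\frac{1}{N}\sum_{i=1}^{N} \frac{\hat{P'}(y_i\mid\mathbf{x}_i)}{\hat{P}(y_i\mid\mathbf{x}_i;\theta_t)} \log \hat{P}(y_i\mid\mathbf{x}_i;\theta_t).$$ Then $$\mathcal{L}_{\text{DIMP}}(\theta_t, D_Q) \ \ge\ -\frac{2}{N}\sum_{i=1}^{N}\hat{P'}(y_i\mid\mathbf{x}_i)\log \hat{P}(y_i\mid\mathbf{x}_i;\theta_t) \;+\; \frac{1}{N}\sum_{i=1}^{N}\hat{P}(y_i\mid\mathbf{x}_i;\theta_t)\log \hat{P}(y_i\mid\mathbf{x}_i;\theta_t).$$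
   Context: $D_Q=\{(\mathbf{x}_i,y_i)\}_{i=1}^N$ is a (synthetic) training set. $\hat{P'}(y\mid\mathbf{x})$ is a fixed classifier's predicted probability of label $y$ given input $\mathbf{x}$ (trained on a small real-world dataset), and $\hat{P}(y\mid\mathbf{x};\theta_t)$ is the predicted probability of the model being trained, with parameters $\theta_t$ at optimization step $t$. $\log$ denotes the natural logarithm. *)

(* Defs.v *)
From mathcomp Require Import all_boot all_order all_algebra.
From mathcomp Require Import reals exp.
Set Implicit Arguments. Unset Strict Implicit. Unset Printing Implicit Defensive.
Import Order.TTheory GRing.Theory Num.Theory.
Local Open Scope ring_scope.

Definition cond_distr (R : realType) (X : Type) (C : nat) (P : X -> 'I_C -> R) : Prop :=
  (forall x c, 0 <= P x c) /\ (forall x, \sum_(c < C) P x c = 1).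

Definition DIMP_loss (R : realType) (X Theta : Type) (C N : nat)
    (P' : X -> 'I_C -> R) (P : Theta -> X -> 'I_C -> R) (theta : Theta)
    (x : 'I_N -> X) (y : 'I_N -> 'I_C) : R :=
  - (N%:R^-1) * \sum_(i < N) (P' (x i) (y i) / P theta (x i) (y i)) * ln (P theta (x i) (y i)).

(* Main.v *)
Require Import Defs.
From mathcomp Require Import all_boot all_order all_algebra.
From mathcomp Require Import reals exp.
From mathcomp Require Import ring lra.
Import Order.TTheory GRing.Theory Num.Theory.
Local Open Scope ring_scope.

Lemma cd_le1 (R : realType) (X : Type) (C : nat) (P : X -> 'I_C -> R) :
  cond_distr P -> forall x c, P x c <= 1.
Proof.
move=> [H0 H1] x c; rewrite -(H1 x) (bigD1 c) //= lerDl.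
by apply: sumr_ge0 => i _; apply: H0.
Qed.

Lemma term_ineq (R : realType) (p q : R) : 0 < p -> p <= 1 -> 0 <= q -> q <= 1 ->
  - 2 * (q * ln p) + p * ln p <= - ((q / p) * ln p).
Proof.
move=> p0 p1 q0 q1.
have l0 : ln p <= 0 := ln_le0 p1.
have h : 0 <= q / p - 2 * q + p.
  have e : q / p - 2 * q + p = (q - 2 * q * p + p * p) / p.
    by field; rewrite gt_eqF.
  have qq : 0 <= q * (1 - q) by apply: mulr_ge0; lra.
  have sq : 0 <= (q - p) * (q - p) by rewrite -expr2 sqr_ge0.
  rewrite e divr_ge0 //; last exact: ltW.
  have -> : q - 2 * q * p + p * p = q * (1 - q) + (q - p) * (q - p) by ring.
  exact: addr_ge0.
suff: 0 <= (- ln p) * (q / p - 2 * q + p) by nra.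
by apply: mulr_ge0 => //; rewrite oppr_ge0.
Qed.

Lemma rearr (R : realType) (n S1 S2 S : R) : 0 <= n ->
  -2 * S1 + S2 <= - S -> - (2 / n) * S1 + n^-1 * S2 <= - n^-1 * S.
Proof.
move=> n0 h.
have -> : - (2 / n) * S1 + n^-1 * S2 = n^-1 * (-2 * S1 + S2) by ring.
have -> : - n^-1 * S = n^-1 * (- S) by ring.
by apply: ler_wpM2l; first by rewrite invr_ge0.
Qed.

Theorem mainTheorem1 (R : realType) (X Theta : Type) (C N : nat)
    (P' : X -> 'I_C -> R) (P : Theta -> X -> 'I_C -> R) (theta : Theta)
    (x : 'I_N -> X) (y : 'I_N -> 'I_C) :
  (0 < N)%N ->
  cond_distr P' ->
  cond_distr (P theta) ->
  (forall i : 'I_N, 0 < P theta (x i) (y i)) ->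
  DIMP_loss P' P theta x y >=
    - (2%:R / N%:R) * \sum_(i < N) P' (x i) (y i) * ln (P theta (x i) (y i))
    + N%:R^-1 * \sum_(i < N) P theta (x i) (y i) * ln (P theta (x i) (y i)).
Proof.
move=> N0 H' H Hp; rewrite /DIMP_loss.
apply: rearr; first by rewrite ler0n.
rewrite mulr_sumr -sumrN -big_split /=; apply: ler_sum => i _.
apply: term_ineq => //.
- exact: cd_le1 H _ _.
- by case: H' => + _; apply.
- exact: cd_le1 H' _ _.
Qed.
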